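(* Let $n$, $m$, and $k$ be any nonnegative integers. Then \[ \sum_{c\ge0} q^{c(c-1+k)} [2c+k]_q \genfrac{[}{]}{0pt}{}{2n+k}{n-c}_q\genfrac{[}{]}{0pt}{}{2m+k}{m-c}_q =\frac{[n+k]_q [m+k]_q}{[n+m+k]_q}\genfrac{[}{]}{0pt}{}{2n+k}{n+k}_q \genfrac{[}{]}{0pt}{}{2m+k}{m+k}_q. \]
   Context: Notation: $[n]_q=\frac{1-q^n}{1-q}$, $[n]_q!=[1]_q[2]_q\cdots[n]_q$, and $\genfrac{[}{]}{0pt}{}{n}{k}_q=\frac{[n]_q!}{[k]_q![n-k]_q!}$ denotes the $q$-binomial coefficient. *)

(* Defs.v *)
From HB Require Import structures.
From mathcomp Require Import all_boot all_order all_algebra.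
From mathcomp Require Import fraction.
Set Implicit Arguments. Unset Strict Implicit. Unset Printing Implicit Defensive.
Import Order.TTheory GRing.Theory Num.Theory.
Local Open Scope ring_scope.

Definition QF := {fraction {poly int}}.
Definition q : QF := FracField.tofrac ('X : {poly int}).

Definition qint (n : nat) : QF := (1 - q ^+ n) / (1 - q).
Definition qfact (n : nat) : QF := \prod_(1 <= i < n.+1) qint i.
Definition qbinom (n k : nat) : QF :=
  if (k <= n)%N then qfact n / (qfact k * qfact (n - k)) else 0.

(* Main.v *)
Require Import Defs.
From HB Require Import structures.
From mathcomp Require Import all_boot all_order all_algebra.
From mathcomp Require Import fraction.
From mathcomp Require Import ring zify.
Import Order.TTheory GRing.Theory Num.Theory.
Local Open Scope ring_scope.

Lemma oneBqX_neq0 (n : nat) : (0 < n)%N -> 1 - q ^+ n != 0.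
Proof.
move=> n0; rewrite /q -tofracXn -tofrac1 -tofracB tofrac_eq0.
apply/eqP => /(congr1 (fun p : {poly int} => p`_0)).
rewrite coefB coef1 coefXn coef0 eq_sym. by case: n n0.
Qed.

Lemma oneBq_neq0 : 1 - q != 0.
Proof. by have := @oneBqX_neq0 1 isT; rewrite expr1. Qed.

Lemma qint_neq0 n : (0 < n)%N -> qint n != 0.
Proof.
move=> n0; rewrite /qint mulf_neq0 ?invr_eq0 ?oneBqX_neq0 ?oneBq_neq0 //.
Qed.

Lemma qint0 : qint 0 = 0.
Proof. by rewrite /qint expr0 subrr mul0r. Qed.

Lemma qfactS n : qfact n.+1 = qfact n * qint n.+1.
Proof. by rewrite /qfact big_nat_recr. Qed.

Lemma qfact_neq0 n : qfact n != 0.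
Proof.
elim: n => [|n IH].
  rewrite /qfact big_geq; [exact: oner_neq0 | exact: leqnn].
rewrite qfactS; apply: mulf_neq0; [exact: IH | exact: qint_neq0].
Qed.

Lemma step_alg (F : fieldType) (a b c d e : F) :
  b != 0 -> c != 0 -> d != 0 -> e != 0 ->
  e * (a / (b * (c * e))) = d * (a / (b * d * c)).
Proof. move=> hb hc hd he; field. by rewrite ?hb ?hc ?hd ?he. Qed.

Lemma qbinom_step N j : (j < N)%N ->
  qint (N - j) * qbinom N j = qint j.+1 * qbinom N j.+1.
Proof.
move=> jN; rewrite /qbinom jN ltnW //.
have -> : (N - j = (N - j.+1).+1)%N by rewrite subnSK.
rewrite !qfactS.
apply: (@step_alg QF).
- exact: qfact_neq0.
- exact: qfact_neq0.
- exact: qint_neq0.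
- exact: qint_neq0.
Qed.

Lemma qbinom_sym N j : (j <= N)%N -> qbinom N j = qbinom N (N - j).
Proof. by move=> jN; rewrite /qbinom jN leq_subr subKn // [qfact j * _]mulrC. Qed.

Lemma shift_alg (F : fieldType) (a x1 y1 x2 y2 b1 b2 c1 c2 D : F) :
  x1 * b1 = x2 * c1 -> y1 * b2 = y2 * c2 ->
  a * x1 * y1 / D * (b1 * b2) = a * x2 * y2 / D * (c1 * c2).
Proof.
move=> h1 h2; transitivity (a / D * ((x1 * b1) * (y1 * b2))); first by ring.
by rewrite h1 h2; ring.
Qed.

Lemma key_alg (F : fieldType) (A B C K S x P1 P2 : F) :
  1 - x != 0 -> (1 - A * B * C * C * K) / (1 - x) != 0 ->
  S * ((1 - C * C * K) / (1 - x)) * P1 * P2 =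
  S * ((1 - A * C * C * K) / (1 - x)) * ((1 - B * C * C * K) / (1 - x)) /
  ((1 - A * B * C * C * K) / (1 - x)) * (P1 * P2) -
  S * C * C * K * ((1 - A) / (1 - x)) * ((1 - B) / (1 - x)) /
  ((1 - A * B * C * C * K) / (1 - x)) * (P1 * P2).
Proof.
move=> hx hD.
have hN : 1 - A * B * C * C * K != 0.
  by apply: contraNneq hD => ->; rewrite mul0r.
by field; rewrite hx hN.
Qed.

Lemma term_id n m k c : (c <= n)%N -> (c <= m)%N -> qint (n + m + k) != 0 ->
  q ^+ (c * (c - 1 + k)) * qint (2 * c + k)
       * qbinom (2 * n + k) (n - c) * qbinom (2 * m + k) (m - c)
  = q ^+ (c * (c - 1 + k)) * qint (n + c + k) * qint (m + c + k)
       / qint (n + m + k) * (qbinom (2 * n + k) (n - c) * qbinom (2 * m + k) (m - c))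
  - q ^+ (c.+1 * (c + k)) * qint (n - c) * qint (m - c)
       / qint (n + m + k) * (qbinom (2 * n + k) (n - c) * qbinom (2 * m + k) (m - c)).
Proof.
move=> cn cm hD.
move: (qbinom (2 * n + k) (n - c)) (qbinom (2 * m + k) (m - c)) => P1 P2.
have e0 : (c.+1 * (c + k) = c * (c - 1 + k) + c + c + k)%N.
  by case: c {cn cm} => [|c]; rewrite ?mul0n ?add0n //=; nia.
have e1 : (n + c + k = (n - c) + c + c + k)%N by lia.
have e2 : (m + c + k = (m - c) + c + c + k)%N by lia.
have e3 : (2 * c + k = c + c + k)%N by lia.
have e4 : (n + m + k = (n - c) + (m - c) + c + c + k)%N by lia.
move: hD; rewrite e0 e1 e2 e3 e4 /qint !exprD.
move: (q ^+ (n - c)) (q ^+ (m - c)) (q ^+ c) (q ^+ k) (q ^+ (c * (c - 1 + k))) => A B C K S.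
move=> hD; exact: (@key_alg QF _ _ _ _ _ _ _ _ oneBq_neq0 hD).
Qed.

Theorem lemma3p5 (n m k : nat) :
  \sum_(0 <= c < (minn n m).+1)
     q ^+ (c * (c - 1 + k)) * qint (2 * c + k)
       * qbinom (2 * n + k) (n - c) * qbinom (2 * m + k) (m - c)
  = qint (n + k) * qint (m + k) / qint (n + m + k)
      * qbinom (2 * n + k) (n + k) * qbinom (2 * m + k) (m + k).
Proof.
case: (posnP (n + m + k)) => [Z|Hpos].
  have [n0 [m0 k0]] : n = 0%N /\ m = 0%N /\ k = 0%N by lia.
  subst n m k; rewrite big_nat1.
  have -> : qint (2 * 0 + 0) = 0 by exact: qint0.
  Show.
  by rewrite !mulr0 !mul0r.
have hD : qint (n + m + k) != 0 by exact: qint_neq0.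
set M := minn n m.
have hMn : (M <= n)%N by exact: geq_minl.
have hMm : (M <= m)%N by exact: geq_minr.
pose B c := qbinom (2 * n + k) (n - c) * qbinom (2 * m + k) (m - c).
pose F c := q ^+ (c * (c - 1 + k)) * qint (n + c + k) * qint (m + c + k)
       / qint (n + m + k) * B c.
pose G c := q ^+ (c.+1 * (c + k)) * qint (n - c) * qint (m - c)
       / qint (n + m + k) * B c.
transitivity (\sum_(0 <= c < M.+1) (F c - G c)).
  apply: eq_big_nat => c /andP[_ hc].
  apply: term_id => //; apply: leq_trans hMn || apply: leq_trans hMm; exact: hc.
rewrite sumrB big_nat_recl // big_nat_recr //=.
have GM : G M = 0.
  rewrite /G; case: (leqP n m) => h.
    have -> : (n - M = 0)%N by rewrite /M; lia.
    by rewrite qint0 mulr0 !mul0r.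
  have -> : (m - M = 0)%N by rewrite /M; lia.
  by rewrite qint0 mulr0 !mul0r.
have FG : \sum_(0 <= i < M) F i.+1 = \sum_(0 <= i < M) G i.
  apply: eq_big_nat => i /andP[_ hi].
  rewrite /F /G /B.
  have -> : (i.+1 - 1 + k = i + k)%N by lia.
  apply: shift_alg.
    have := @qbinom_step (2 * n + k) (n - i.+1) ltac:(lia).
    have -> : (2 * n + k - (n - i.+1) = n + i.+1 + k)%N by lia.
    by have -> : ((n - i.+1).+1 = n - i)%N by lia.
  have := @qbinom_step (2 * m + k) (m - i.+1) ltac:(lia).
  have -> : (2 * m + k - (m - i.+1) = m + i.+1 + k)%N by lia.
  by have -> : ((m - i.+1).+1 = m - i)%N by lia.
rewrite FG GM addr0 addrK /F /B /=.
rewrite mul0n expr0 mul1r !addn0 !subn0.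
rewrite (@qbinom_sym (2 * n + k) n) ?(@qbinom_sym (2 * m + k) m); try lia.
have -> : (2 * n + k - n = n + k)%N by lia.
have -> : (2 * m + k - m = m + k)%N by lia.
by rewrite !mulrA.
Qed.
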